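(* Assume $\rho$ satisfies the Loss Kernel Assumption, let $\zeta\ge\xi\ge0$, let $X^{(k)}\in\mathcal X$, let $G(\cdot\mid X^{(k)})$ be as defined below (with parameter $\xi$), and define $$H(X\mid X^{(k)})=\sum_{\alpha\in\mathcal A}\sum_{(i,j)\in\vec{\mathcal E}^{\alpha\alpha}}E^{\alpha\alpha}_{ij}(X\mid X^{(k)})+\sum_{\alpha\ne\beta}\sum_{(i,j)\in\vec{\mathcal E}^{\alpha\beta}}E^{\alpha\beta}_{ij}(X\mid X^{(k)})+\tfrac{\zeta}{2}\|X-X^{(k)}\|^2 .$$ Then there exist PSD matrices $\Pi^{\alpha(k)}_i\in\mathbb R^{(d+1)\times(d+1)}$ ($\alpha\in\mathcal A$, $1\le i\le n_\alpha$), with $\Pi^{\alpha(k)}=\mathrm{diag}(\Pi^{\alpha(k)}_1,\dots,\Pi^{\alpha(k)}_{n_\alpha})$ (acting so that $\|X^\alpha\|^2_{\Pi^{\alpha(k)}}=\sum_i\|X^\alpha_i\|^2_{\Pi^{\alpha(k)}_i}$) and $\Pi^{(k)}=\mathrm{diag}(\Pi^{1(k)},\dots,\Pi^{|\mathcal A|(k)})$, such that: (a) $H(X\mid X^{(k)})=\sum_\alpha H^\alpha(X^\alpha\mid X^{(k)})+F(X^{(k)})$ and $H^\alpha(X^\alpha\mid X^{(k)})=\sum_{i=1}^{n_\alpha}H^\alpha_i(X^\alpha_i\mid X^{(k)})$, where $H^\alpha(X^\alpha\mid X^{(k)})=\frac12\|X^\alpha-X^{\alpha(k)}\|^2_{\Pi^{\alpha(k)}}+\langle\nabla_{X^\alpha}F(X^{(k)}),X^\alpha-X^{\alpha(k)}\rangle$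 and $H^\alpha_i(X^\alpha_i\mid X^{(k)})=\frac12\|X^\alpha_i-X^{\alpha(k)}_i\|^2_{\Pi^{\alpha(k)}_i}+\langle\nabla_{X^\alpha_i}F(X^{(k)}),X^\alpha_i-X^{\alpha(k)}_i\rangle$; (b) $H(X\mid X^{(k)})=\frac12\|X-X^{(k)}\|^2_{\Pi^{(k)}}+\langle\nabla F(X^{(k)}),X-X^{(k)}\rangle+F(X^{(k)})$, and $H(X\mid X^{(k)})\ge G(X\mid X^{(k)})\ge F(X)$ for all $X$, with equalities if $X=X^{(k)}$; (c) $\Pi^{(k)}\succeq\Gamma^{(k)}\succeq M^{(k)}$, where $\Gamma^{(k)}=\mathrm{diag}(\Gamma^{1(k)},\dots,\Gamma^{|\mathcal A|(k)})$ is the block-diagonal matrix of the quadratic part of $G$ defined below; (d) there is a constant PSD matrix $\Pi$, independent of $X^{(k)}$, with $\Pi\succeq\Pi^{(k)}$ for every $X^{(k)}\in\mathcal X$; (e) $H^\alpha(X^\alpha\mid X^{(k)})\ge G^\alpha(X^\alpha\mid X^{(k)})$ for all $X^\alpha$, with equality if $X^\alpha=X^{\alpha(k)}$.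
   Context: Setup. Fix an integer $d\ge 2$, a finite set of nodes $\mathcal A=\{1,\dots,|\mathcal A|\}$, positive integers $n_\alpha$ ($\alpha\in\mathcal A$) and $n=\sum_{\alpha}n_\alpha$. An element $X\in\mathbb R^{d\times(d+1)n}$ is written $X=[X^1\ \cdots\ X^{|\mathcal A|}]$ with $X^\alpha=[t^\alpha\ R^\alpha]\in\mathbb R^{d\times(d+1)n_\alpha}$, where $t^\alpha=[t^\alpha_1\ \cdots\ t^\alpha_{n_\alpha}]$ with $t^\alpha_i\in\mathbb R^d$ and $R^\alpha=[R^\alpha_1\ \cdots\ R^\alpha_{n_\alpha}]$ with $R^\alpha_i\in\mathbb R^{d\times d}$; write $X^\alpha_i=[t^\alpha_i\ R^\alpha_i]\in\mathbb R^{d\times(d+1)}$. The feasible set is $\mathcal X=\{X:\ R^\alpha_i\in SO(d)\ \forall\alpha,i\}$; $X^{(k)}=[X^{1(k)}\ \cdots\ X^{|\mathcal A|(k)}]$. We use $\langle A,B\rangle=\mathrm{tr}(AB^\top)$, $\|\cdot\|$ the Frobenius norm, and for PSD $M$, $\|Y\|_M^2=\mathrm{tr}(YMY^\top)$. Data: for each ordered pair $(\alpha,\beta)\in\mathcal A\times\mathcal A$ (including $\alpha=\beta$) a finite set $\vec{\mathcal E}^{\alpha\beta}\subseteq\{1,\dots,n_\alpha\}\times\{1,\dots,n_\beta\}$, and for each $(i,j)\in\vec{\mathcal E}^{\alpha\beta}$ a rotation $\tilde R^{\alpha\beta}_{ij}\in SO(d)$, a vector $\tilde t^{\alpha\beta}_{ij}\in\mathbb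 R^d$ and weights $\kappa^{\alpha\beta}_{ij},\tau^{\alpha\beta}_{ij}\ge0$. For $(i,j)\in\vec{\mathcal E}^{\alpha\beta}$ define the quadratic form on $\mathbb R^{d\times(d+1)n}$ $$q^{\alpha\beta}_{ij}(X)=\kappa^{\alpha\beta}_{ij}\|R^\alpha_i\tilde R^{\alpha\beta}_{ij}-R^\beta_j\|^2+\tau^{\alpha\beta}_{ij}\|R^\alpha_i\tilde t^{\alpha\beta}_{ij}+t^\alpha_i-t^\beta_j\|^2 .$$ Loss Kernel Assumption: $\rho:\mathbb R^+\to\mathbb R$ ($\mathbb R^+=[0,\infty)$) satisfies (a) $\rho(s)\ge0$ with equality iff $s=0$; (b) $\rho$ is continuously differentiable on $\mathbb R^+$; (c) $\rho$ is concave; (d) $0\le\rho'(s)\le1$ for all $s\ge0$ and $\rho'(0)=1$; (e) $\varphi(X)=\rho(\|X\|^2)$ has Lipschitz continuous gradient on $\mathbb R^{m\times n}$. Define $F^{\alpha\alpha}_{ij}(X)=\frac12q^{\alpha\alpha}_{ij}(X)$ for $(i,j)\in\vec{\mathcal E}^{\alpha\alpha}$ and $F^{\alpha\beta}_{ij}(X)=\frac12\rho\big(q^{\alpha\beta}_{ij}(X)\big)$ for $\alpha\ne\beta$, $(i,j)\in\vec{\mathcal E}^{\alpha\beta}$ (defined on all of $\mathbb R^{d\times(d+1)n}$), and the objective $$F(X)=\sum_{\alpha\in\mathcal A}\sum_{(i,j)\in\vec{\mathcal E}^{\alpha\alpha}}F^{\alpha\alpha}_{ij}(X)+\sum_{\alpha\ne\beta}\sum_{(i,j)\in\vec{\mathcal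 E}^{\alpha\beta}}F^{\alpha\beta}_{ij}(X).$$ $\nabla$ denotes the Euclidean gradient and $\nabla_{X^\alpha}$, $\nabla_{X^\alpha_i}$ partial gradients. Weights: $\omega^{\alpha\beta(k)}_{ij}=1$ if $\alpha=\beta$ and $\omega^{\alpha\beta(k)}_{ij}=\rho'\big(q^{\alpha\beta}_{ij}(X^{(k)})\big)$ if $\alpha\neq\beta$. Decoupled quadratic form: for $(i,j)\in\vec{\mathcal E}^{\alpha\beta}$, $$p^{\alpha\beta}_{ij}(X)=2\Big(\kappa^{\alpha\beta}_{ij}\|R^\alpha_i\|^2+\kappa^{\alpha\beta}_{ij}\|R^\beta_j\|^2+\tau^{\alpha\beta}_{ij}\|R^\alpha_i\tilde t^{\alpha\beta}_{ij}+t^\alpha_i\|^2+\tau^{\alpha\beta}_{ij}\|t^\beta_j\|^2\Big),$$ and $E^{\alpha\beta}_{ij}(X\mid X^{(k)})=\tfrac12\omega^{\alpha\beta(k)}_{ij}\,p^{\alpha\beta}_{ij}(X-X^{(k)})+\langle\nabla F^{\alpha\beta}_{ij}(X^{(k)}),X-X^{(k)}\rangle+F^{\alpha\beta}_{ij}(X^{(k)})$ (for $\alpha=\beta$ as well). $G(X\mid X^{(k)})=\sum_{\alpha}\sum_{\vec{\mathcal E}^{\alpha\alpha}}F^{\alpha\alpha}_{ij}(X)+\sum_{\alpha\ne\beta}\sum_{\vec{\mathcal E}^{\alpha\beta}}E^{\alpha\beta}_{ij}(X\mid X^{(k)})+\frac\xi2\|X-X^{(k)}\|^2$; its quadratic part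 is block diagonal, i.e. $G(X\mid X^{(k)})=\sum_\alpha G^\alpha(X^\alpha\mid X^{(k)})+F(X^{(k)})$ with $G^\alpha(X^\alpha\mid X^{(k)})=\frac12\|X^\alpha-X^{\alpha(k)}\|^2_{\Gamma^{\alpha(k)}}+\langle\nabla_{X^\alpha}F(X^{(k)}),X^\alpha-X^{\alpha(k)}\rangle$ for PSD $\Gamma^{\alpha(k)}$. The PSD matrix $M^{(k)}$ is defined by $\|Y\|^2_{M^{(k)}}=\sum_{\alpha}\sum_{\vec{\mathcal E}^{\alpha\alpha}}q^{\alpha\alpha}_{ij}(Y)+\sum_{\alpha\ne\beta}\sum_{\vec{\mathcal E}^{\alpha\beta}}\omega^{\alpha\beta(k)}_{ij}q^{\alpha\beta}_{ij}(Y)$. *)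

(* Defs.v *)
From HB Require Import structures.
From mathcomp Require Import all_boot all_order all_algebra.
From mathcomp Require Import all_classical all_reals all_analysis.
Set Implicit Arguments. Unset Strict Implicit. Unset Printing Implicit Defensive.
Import Order.TTheory GRing.Theory Num.Theory.
Import numFieldNormedType.Exports.
Local Open Scope classical_set_scope.
Local Open Scope ring_scope.

Section Generic.
Variable R : realType.

Definition ipM (m k : nat) (A B : 'M[R]_(m, k)) : R :=
  \sum_(r < m) \sum_(c < k) A r c * B r c.
Definition fro2 (m k : nat) (A : 'M[R]_(m, k)) : R := ipM A A.

Definition wnormM (m k : nat) (Y : 'M[R]_(m, k)) (P : 'M[R]_k) : R :=
  \tr (Y *m P *m Y^T).

Definition qform (J : finType) (P : J -> J -> R) (z : J -> R) : R :=
  \sum_(u : J) \sum_(w : J) z u * P u w * z w.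
Definition psdf (J : finType) (P : J -> J -> R) : Prop :=
  (forall u w, P u w = P w u) /\ (forall z : J -> R, 0 <= qform P z).
Definition psdM (k : nat) (P : 'M[R]_k) : Prop := psdf (fun u w => P u w).

Definition SOmx (k : nat) (Q : 'M[R]_k) : Prop :=
  Q^T *m Q = 1%:M /\ \det Q = 1.

Definition gradM (m k : nat) (f : 'M[R]_(m, k) -> R) (X : 'M[R]_(m, k))
  : 'M[R]_(m, k) :=
  \matrix_(i, j) derive1 (fun t : R => f (X + t *: delta_mx i j)) 0.

(* Loss Kernel Assumption on rho : R^+ -> R  (rho is given as a map    *)
(* R -> R whose values on negative reals are irrelevant; drho is its   *)
(* derivative on R^+ = [0, oo), one-sided at 0)                        *)
Definition lk_pos (rho : R -> R) : Prop :=
  forall s, 0 <= s -> 0 <= rho s /\ (rho s = 0 <-> s = 0).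
Definition lk_C1 (rho drho : R -> R) : Prop :=
  (forall s, 0 <= s ->
     (fun h : R => h^-1 * (rho (s + h) - rho s))
       @ within [set h | 0 <= s + h] (0:R)^' --> drho s)
  /\ {within [set s | 0 <= s], continuous drho}.
Definition lk_concave (rho : R -> R) : Prop :=
  forall s1 s2 t, 0 <= s1 -> 0 <= s2 -> 0 <= t <= 1 ->
    t * rho s1 + (1 - t) * rho s2 <= rho (t * s1 + (1 - t) * s2).
Definition lk_slope (drho : R -> R) : Prop :=
  (forall s, 0 <= s -> 0 <= drho s <= 1) /\ drho 0 = 1.
Definition lk_lipgrad (rho : R -> R) : Prop :=
  forall m k : nat, exists L : R, forall X Y : 'M[R]_(m, k),
    Num.sqrt (fro2 (gradM (fun Z => rho (fro2 Z)) X
                    - gradM (fun Z => rho (fro2 Z)) Y))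
    <= L * Num.sqrt (fro2 (X - Y)).
Definition loss_kernel (rho drho : R -> R) : Prop :=
  [/\ lk_pos rho, lk_C1 rho drho, lk_concave rho, lk_slope drho
    & lk_lipgrad rho].
End Generic.

Definition node (A : nat) (n : 'I_A -> nat) : finType :=
  {a : 'I_A & 'I_(n a)}.

Section Problem.
Variables (R : realType) (d A : nat) (n : 'I_A -> nat).

(* the variable X in R^{d x (d+1) n}, stored blockwise:
   X v = X^alpha_i = [t^alpha_i R^alpha_i] in R^{d x (1+d)} for v = (alpha,i) *)
Definition state := node n -> 'M[R]_(d, 1 + d).
Definition nd (a : 'I_A) (i : 'I_(n a)) : node n := existT _ a i.
Definition tv (X : state) (a : 'I_A) (i : 'I_(n a)) : 'M[R]_(d, 1) :=
  lsubmx (X (nd i)).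
Definition Rv (X : state) (a : 'I_A) (i : 'I_(n a)) : 'M[R]_d :=
  rsubmx (X (nd i)).
Definition feasible (X : state) : Prop := forall a (i : 'I_(n a)), SOmx (Rv X i).

Definition blk (a : 'I_A) := 'I_(n a) -> 'M[R]_(d, 1 + d).
Definition blockof (X : state) (a : 'I_A) : blk a := fun i => X (nd i).
Arguments blockof X a : clear implicits.

Definition st_sub (X Y : state) : state := fun v => X v - Y v.
Definition ipS (X Y : state) : R := \sum_(v : node n) ipM (X v) (Y v).
Definition nrm2 (X : state) : R := ipS X X.
Definition blk_sub a (X Y : blk a) : blk a := fun i => X i - Y i.
Definition ipB a (X Y : blk a) : R := \sum_(i < n a) ipM (X i) (Y i).

(* Euclidean gradient of f : R^{d x (d+1)n} -> R (matrix of partial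
   derivatives); its blocks are the partial gradients
   nabla_{X^alpha_i} f = gradS f X (nd i),  nabla_{X^alpha} f = blockof (gradS f X) alpha *)
Definition e_st (v : node n) (r : 'I_d) (c : 'I_(1 + d)) : state :=
  fun w => if w == v then delta_mx r c else 0.
Definition gradS (f : state -> R) (X : state) : state :=
  fun v => \matrix_(r, c)
    derive1 (fun t : R => f (fun w => X w + t *: e_st v r c w)) 0.

(* matrices acting on the columns of X^alpha (indexed by (i, column)) and
   on the columns of X (indexed by (node, column)) *)
Definition colB (a : 'I_A) : finType := ('I_(n a) * 'I_(1 + d))%type.
Definition colG : finType := (node n * 'I_(1 + d))%type.
Definition wnB a (P : colB a -> colB a -> R) (Y : blk a) : R :=
  \sum_(r < d) qform P (fun u : colB a => Y u.1 r u.2).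
Definition wnG (P : colG -> colG -> R) (Y : state) : R :=
  \sum_(r < d) qform P (fun u : colG => Y u.1 r u.2).
(* z^T diag(Gamma^1,...,Gamma^|A|) z *)
Definition qdiagB (Gam : forall a : 'I_A, colB a -> colB a -> R)
  (z : colG -> R) : R :=
  \sum_(a < A) qform (Gam a) (fun u : colB a => z (nd u.1, u.2)).
(* z^T diag(Pi_v)_v z, i.e. with Pi^alpha = diag(Pi^alpha_1..Pi^alpha_{n_alpha}) *)
Definition qdiagN (Pi : node n -> 'M[R]_(1 + d)) (z : colG -> R) : R :=
  \sum_(v : node n) qform (fun c c' => Pi v c c') (fun c => z (v, c)).

Record pgo_data := PgoData {
  Edg : forall a b : 'I_A, {set 'I_(n a) * 'I_(n b)};
  Rt  : forall a b : 'I_A, 'I_(n a) -> 'I_(n b) -> 'M[R]_d;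
  tt  : forall a b : 'I_A, 'I_(n a) -> 'I_(n b) -> 'M[R]_(d, 1);
  kap : forall a b : 'I_A, 'I_(n a) -> 'I_(n b) -> R;
  tau : forall a b : 'I_A, 'I_(n a) -> 'I_(n b) -> R }.

Definition data_ok (D : pgo_data) : Prop :=
  forall a b (e : 'I_(n a) * 'I_(n b)), e \in Edg D a b ->
    [/\ SOmx (Rt D e.1 e.2), 0 <= kap D e.1 e.2 & 0 <= tau D e.1 e.2].

Variables (D : pgo_data) (rho drho : R -> R).

Definition qf a b (i : 'I_(n a)) (j : 'I_(n b)) (X : state) : R :=
  kap D i j * fro2 (Rv X i *m Rt D i j - Rv X j)
  + tau D i j * fro2 (Rv X i *m tt D i j + tv X i - tv X j).

Definition pf a b (i : 'I_(n a)) (j : 'I_(n b)) (X : state) : R :=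
  2 * (kap D i j * fro2 (Rv X i) + kap D i j * fro2 (Rv X j)
       + tau D i j * fro2 (Rv X i *m tt D i j + tv X i)
       + tau D i j * fro2 (tv X j)).

Definition Fe a b (i : 'I_(n a)) (j : 'I_(n b)) (X : state) : R :=
  if a == b then qf i j X / 2 else rho (qf i j X) / 2.

Definition omega a b (i : 'I_(n a)) (j : 'I_(n b)) (Xk : state) : R :=
  if a == b then 1 else drho (qf i j Xk).

Definition sum_aa (f : forall a : 'I_A, 'I_(n a) -> 'I_(n a) -> R) : R :=
  \sum_(a < A) \sum_(e in Edg D a a) f a e.1 e.2.
Definition sum_ab (f : forall a b : 'I_A, 'I_(n a) -> 'I_(n b) -> R) : R :=
  \sum_(a < A) \sum_(b < A | b != a) \sum_(e in Edg D a b) f a b e.1 e.2.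

Definition Fobj (X : state) : R :=
  sum_aa (fun a i j => Fe i j X) + sum_ab (fun a b i j => Fe i j X).

Definition Ee a b (i : 'I_(n a)) (j : 'I_(n b)) (X Xk : state) : R :=
  omega i j Xk / 2 * pf i j (st_sub X Xk)
  + ipS (gradS (Fe i j) Xk) (st_sub X Xk) + Fe i j Xk.

Definition Gfun (xi : R) (X Xk : state) : R :=
  sum_aa (fun a i j => Fe i j X) + sum_ab (fun a b i j => Ee i j X Xk)
  + xi / 2 * nrm2 (st_sub X Xk).

Definition Hfun (zeta : R) (X Xk : state) : R :=
  sum_aa (fun a i j => Ee i j X Xk) + sum_ab (fun a b i j => Ee i j X Xk)
  + zeta / 2 * nrm2 (st_sub X Xk).

Definition Mform (Xk Y : state) : R :=
  sum_aa (fun a i j => qf i j Y) + sum_ab (fun a b i j => omega i j Xk * qf i j Y).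

Definition Gblk a (Gam : colB a -> colB a -> R) (Y : blk a) (Xk : state) : R :=
  wnB Gam (blk_sub Y (blockof Xk a)) / 2
  + ipB (blockof (gradS Fobj Xk) a) (blk_sub Y (blockof Xk a)).

Definition Hnode a (i : 'I_(n a)) (P : 'M[R]_(1 + d)) (Y : 'M[R]_(d, 1 + d))
  (Xk : state) : R :=
  wnormM (Y - Xk (nd i)) P / 2 + ipM (gradS Fobj Xk (nd i)) (Y - Xk (nd i)).

Definition Hblk a (Pi : node n -> 'M[R]_(1 + d)) (Y : blk a) (Xk : state) : R :=
  (\sum_(i < n a) wnormM (Y i - Xk (nd i)) (Pi (nd i))) / 2
  + ipB (blockof (gradS Fobj Xk) a) (blk_sub Y (blockof Xk a)).

Definition wnPi (Pi : node n -> 'M[R]_(1 + d)) (Y : state) : R :=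
  \sum_(v : node n) wnormM (Y v) (Pi v).

End Problem.

Arguments blockof {R d A n} X a.

(* Main.v *)
Require Import Defs.
From HB Require Import structures.
From mathcomp Require Import all_boot all_order all_algebra.
From mathcomp Require Import all_classical all_reals all_analysis.
From mathcomp Require Import ring lra.
Import Order.TTheory GRing.Theory Num.Theory.
Import numFieldNormedType.Exports.

Local Open Scope classical_set_scope.
Local Open Scope ring_scope.
Section A.
Variable R : realType.
Lemma near_ws (S : set R) (P : R -> Prop) :
  (\forall h \near within S 0^', P h) ->
  exists2 e : R, 0 < e & forall h, `|h| < e -> h != 0 -> S h -> P h.
Proof.
move=> /nbhs_ballP [e e0 He]; exists e => // h hl h0 Sh.
apply: He => //=; rewrite /ball /= sub0r normrN //.
Qed.
Lemma near_d (P : R -> Prop) :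
  (exists2 e : R, 0 < e & forall h, `|h| < e -> h != 0 -> P h) ->
  \forall h \near 0^', P h.
Proof.
move=> [e e0 He]; apply/nbhs_ballP; exists e => // h /= hl h0.
apply: He => //; move: hl; rewrite /ball /= sub0r normrN //.
Qed.

Variables rho drho : R -> R.
Hypothesis LK : loss_kernel rho drho.

Lemma C1_eps s : 0 <= s -> forall e : R, 0 < e ->
  exists2 del : R, 0 < del & forall h, `|h| < del -> h != 0 -> 0 <= s + h ->
    `|drho s - h^-1 * (rho (s + h) - rho s)| < e.
Proof.
move=> s0 e e0; case: LK => _ [C _] _ _ _.
have := C s s0; move/cvgrPdist_lt => /(_ e e0) /near_ws [del d0 Hd].
by exists del => // h h1 h2 h3; apply: Hd.
Qed.

Lemma aux_ineq (h D t X Dl c : R) : 0 < h -> 0 < D -> t * D = h -> t * Dl <= X -> X < h * c -> Dl < c * D.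
Proof.
move=> h0 D0 tD tX Xh.
have t0 : 0 < t by nra.
have : t * (Dl - c * D) < 0 by nra.
by rewrite pmulr_rlt0 // subr_lt0.
Qed.

Lemma tangent s1 s2 : 0 <= s1 -> 0 <= s2 -> rho s2 <= rho s1 + drho s1 * (s2 - s1).
Proof.
move=> h1 h2; case: LK => _ _ Hc _ _.
have [lt|gt|eq] := ltgtP s1 s2; last by rewrite eq subrr mulr0 addr0.
- set D := s2 - s1; have D0 : 0 < D by rewrite subr_gt0.
  suff H : forall e, 0 < e -> rho s2 - rho s1 < (drho s1 + e) * D.
    apply/ler_addgt0Pr => e e0; have := H (e / D) (divr_gt0 e0 D0).
    rewrite mulrDl divfK ?gt_eqF //; lra.
  move=> e e0; have [del d0 Hd] := @C1_eps s1 h1 e e0.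
  set h := Num.min (del/2) D.
  have h0 : 0 < h by rewrite lt_min D0 andbT divr_gt0.
  have hD : h <= D by rewrite ge_min lexx orbT.
  have hd : h < del.
    apply: (le_lt_trans (y := del / 2)); first by rewrite ge_min lexx.
    lra.
  set t := h / D.
  have tD : t * D = h by rewrite /t divfK ?gt_eqF.
  have t0 : 0 <= t by rewrite divr_ge0 ?ltW.
  have t1 : t <= 1 by rewrite /t ler_pdivrMr // mul1r.
  have := Hc s2 s1 t h2 h1; rewrite t0 t1 => /(_ isT).
  have -> : t * s2 + (1 - t) * s1 = s1 + h by rewrite -tD /D; ring.
  move=> Hconc.
  have := Hd h; rewrite (ger0_norm (ltW h0)) => /(_ hd (lt0r_neq0 h0)).
  have sh : 0 <= s1 + h by rewrite addr_ge0 // ltW.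
  move=> /(_ sh); rewrite ltr_norml => /andP [Hn _].
  apply: (@aux_ineq h D t (rho (s1 + h) - rho s1) _ _ h0 D0 tD); first by move: Hconc; rewrite mulrBr mulrBl mul1r => ?; lra.
  have : h^-1 * (rho (s1 + h) - rho s1) < drho s1 + e.
    by move: Hn; set u := h^-1 * _ => ?; lra.
  by rewrite mulrC ltr_pdivrMr // mulrC.
- set D := s1 - s2; have D0 : 0 < D by rewrite subr_gt0.
  suff H : forall e, 0 < e -> rho s2 - rho s1 < (e - drho s1) * D.
    apply/ler_addgt0Pr => e e0; have := H (e / D) (divr_gt0 e0 D0).
    rewrite mulrBl divfK ?gt_eqF // /D; lra.
  move=> e e0; have [del d0 Hd] := @C1_eps s1 h1 e e0.
  set m := Num.min (del/2) D.
  have m0 : 0 < m by rewrite lt_min D0 andbT divr_gt0.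
  have mD : m <= D by rewrite ge_min lexx orbT.
  have md : m < del.
    apply: (le_lt_trans (y := del / 2)); first by rewrite ge_min lexx.
    lra.
  set t := m / D.
  have tD : t * D = m by rewrite /t divfK ?gt_eqF.
  have t0 : 0 <= t by rewrite divr_ge0 ?ltW.
  have t1 : t <= 1 by rewrite /t ler_pdivrMr // mul1r.
  have := Hc s2 s1 t h2 h1; rewrite t0 t1 => /(_ isT).
  have -> : t * s2 + (1 - t) * s1 = s1 + - m by rewrite -tD /D; ring.
  move=> Hconc.
  have := Hd (- m); rewrite normrN (ger0_norm (ltW m0)).
  rewrite oppr_eq0 => /(_ md (lt0r_neq0 m0)).
  have sh : 0 <= s1 + - m by rewrite /D in mD; lra.
  move=> /(_ sh); rewrite ltr_norml => /andP [_ Hn].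
  apply: (@aux_ineq m D t (rho (s1 + - m) - rho s1) _ _ m0 D0 tD); first by move: Hconc; rewrite mulrBr mulrBl mul1r => ?; lra.
  have : (rho (s1 + - m) - rho s1) / m < e - drho s1.
    by move: Hn; rewrite invrN mulNr mulrC; set u := _ / m => ?; lra.
  by rewrite ltr_pdivrMr // mulrC.
Qed.

Definition quot (f : R -> R) (h : R) : R := h^-1 *: (f (h + 0) - f 0).

Lemma lin_cvg (be ga : R) : (fun h => (be + h * ga) / 2) @ 0^' --> be / 2.
Proof.
have H1 : (fun h : R => h) @ 0^' --> (0:R) by apply: cvg_within.
have -> : be / 2 = (be + 0 * ga) * 2^-1 by rewrite mul0r addr0.
apply: cvgM; last exact: cvg_cst.
apply: cvgD; first exact: cvg_cst.
apply: cvgM => //; exact: cvg_cst.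
Qed.

Lemma quotQ2 (al be ga : R) :
  quot (fun t => (al + t * be + t ^+ 2 * ga) / 2) @ 0^' --> be / 2.
Proof.
apply: cvg_trans _ (lin_cvg be ga); apply: near_eq_cvg; apply: near_d.
exists 1 => // h _ h0; rewrite /quot /= !addr0 mul0r expr0n /= mul0r addr0.
rewrite -[_ *: _]/(_ * _).
by field.
Qed.


Definition phiC (al k : R) := if k == 0 then drho al else k^-1 * (rho (al + k) - rho al).
Definition kkQ (be ga h : R) := h * be + h ^+ 2 * ga.

Lemma quotRQ (al be ga : R) : (forall t, 0 <= al + t * be + t ^+ 2 * ga) ->
  quot (fun t => rho (al + t * be + t ^+ 2 * ga) / 2) @ 0^' --> drho al * be / 2.
Proof.
move=> Hq.
have al0 : 0 <= al by have := Hq 0; rewrite mul0r expr0n /= mul0r !addr0.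
set phi := phiC al. set kk := kkQ be ga.
have Hphi : (fun h => phi (kk h)) @ 0^' --> drho al.
  apply/cvgrPdist_lt => e e0.
  have [del d0 Hd] := @C1_eps al al0 e e0.
  apply: near_d.
  pose M := `|be| + `|ga| + 1.
  have M0 : 0 < M by rewrite /M ltr_pwDr // addr_ge0.
  exists (Num.min 1 (del / M)); first by rewrite lt_min ltr01 divr_gt0.
  move=> h; rewrite lt_min => /andP [h1 h2] h0.
  rewrite /phi /phiC; case: (eqVneq (kk h) 0) => [_|kn]; first by rewrite subrr normr0.
  apply: Hd; [| exact: kn | by have := Hq h; rewrite /kk /kkQ addrA].
  rewrite (_ : kk h = h * (be + h * ga)); last by rewrite /kk /kkQ; ring.
  rewrite normrM.
  have y1 : `|be + h * ga| <= `|be| + `|h| * `|ga|.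
    by rewrite -normrM; apply: ler_normD.
  have x0 : 0 <= `|h| by [].
  have y2 : `|be + h * ga| <= M.
    apply: (le_trans y1); rewrite /M -addrA lerD2l.
    have : `|h| * `|ga| <= `|ga| by rewrite ler_piMl // ltW.
    move=> ?; lra.
  have h3 : `|h| * M < del by rewrite -ltr_pdivlMr.
  apply: (le_lt_trans _ h3); exact: ler_wpM2l.
have -> : drho al * be / 2 = drho al * (be / 2) by rewrite mulrA.
apply: cvg_trans _ (cvgM Hphi (lin_cvg be ga)).
apply: near_eq_cvg; apply: near_d.
exists 1 => // h _ h0; rewrite /quot /= !addr0 mul0r expr0n /= mul0r addr0.
rewrite -[_ *: _]/(_ * _) -addrA.
rewrite /phi /phiC (_ : h * be + h ^+ 2 * ga = kk h) //; case: (eqVneq (kk h) 0) => [kh|kn].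
  have kh' : h * (be + h * ga) = 0 by rewrite -kh /kk /kkQ; ring.
  have : be + h * ga = 0.
    by move/eqP: kh'; rewrite mulf_eq0 (negbTE h0) /= => /eqP.
  by move=> ->; rewrite kh subrr mul0r !mulr0.
have wn : be + h * ga != 0.
  apply: contra kn => /eqP w.
  have -> : kk h = h * (be + h * ga) by rewrite /kk /kkQ; ring.
  by rewrite w mulr0.
rewrite (_ : kk h = h * (be + h * ga)); last by rewrite /kk /kkQ; ring.
rewrite addr0; by field; rewrite h0 wn.
Qed.

Lemma cvg_bigsum (I : Type) (r : seq I) (P : pred I) (f : I -> R -> R) (l : I -> R) :
  (forall i, P i -> f i @ 0^' --> l i) ->
  (fun h => \sum_(i <- r | P i) f i h) @ 0^' --> \sum_(i <- r | P i) l i.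
Proof.
move=> Hf; elim: r => [|x r IH].
  rewrite big_nil (_ : (fun h => \sum_(i <- [::] | P i) f i h) = fun=> 0).
    exact: cvg_cst.
  by apply: funext => h; rewrite big_nil.
rewrite big_cons; case Px: (P x).
  rewrite (_ : (fun h => \sum_(i <- x :: r | P i) f i h) = f x + (fun h => \sum_(i <- r | P i) f i h)).
    by apply: cvgD => //; apply: Hf.
  by apply: funext => h; rewrite big_cons Px.
rewrite (_ : (fun h => \sum_(i <- x :: r | P i) f i h) = (fun h => \sum_(i <- r | P i) f i h)) //.
by apply: funext => h; rewrite big_cons Px.
Qed.

Lemma derive1_quot (f : R -> R) l : quot f @ 0^' --> l -> derive1 f 0 = l.
Proof. by move=> H; rewrite /derive1; apply: (norm_cvg_lim H). Qed.

End A.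

Set Implicit Arguments. Unset Strict Implicit. Unset Printing Implicit Defensive.
Section Gen.
Variable R : realType.

Lemma ipMC m k (A B : 'M[R]_(m, k)) : ipM A B = ipM B A.
Proof. by apply: eq_bigr => r _; apply: eq_bigr => c _; rewrite mulrC. Qed.
Lemma ipMDr m k (A B C : 'M[R]_(m, k)) : ipM A (B + C) = ipM A B + ipM A C.
Proof.
rewrite /ipM -big_split; apply: eq_bigr => r _; rewrite -big_split.
by apply: eq_bigr => c _; rewrite mxE mulrDr.
Qed.
Lemma ipMZr m k (A B : 'M[R]_(m, k)) t : ipM A (t *: B) = t * ipM A B.
Proof.
rewrite /ipM mulr_sumr; apply: eq_bigr => r _; rewrite mulr_sumr.
by apply: eq_bigr => c _; rewrite mxE mulrCA.
Qed.
Lemma ipMDl m k (A B C : 'M[R]_(m, k)) : ipM (B + C) A = ipM B A + ipM C A.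
Proof. by rewrite ipMC ipMDr ![ipM A _]ipMC. Qed.
Lemma ipMZl m k (A B : 'M[R]_(m, k)) t : ipM (t *: B) A = t * ipM B A.
Proof. by rewrite ipMC ipMZr ipMC. Qed.
Lemma ipM0r m k (A : 'M[R]_(m, k)) : ipM A 0 = 0.
Proof. by rewrite /ipM big1 // => r _; rewrite big1 // => c _; rewrite mxE mulr0. Qed.
Lemma ipMNr m k (A B : 'M[R]_(m, k)) : ipM A (- B) = - ipM A B.
Proof. by rewrite -scaleN1r ipMZr mulN1r. Qed.
Lemma ipMNl m k (A B : 'M[R]_(m, k)) : ipM (- B) A = - ipM B A.
Proof. by rewrite ipMC ipMNr ipMC. Qed.
Lemma fro2_ge0 m k (A : 'M[R]_(m, k)) : 0 <= fro2 A.
Proof. by apply: sumr_ge0 => r _; apply: sumr_ge0 => c _; rewrite -expr2 sqr_ge0. Qed.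
Lemma fro2_shift m k (M N : 'M[R]_(m, k)) t :
  fro2 (M + t *: N) = fro2 M + t * (2 * ipM M N) + t ^+ 2 * fro2 N.
Proof.
rewrite /fro2 ipMDl !ipMDr !ipMZl !ipMZr [ipM N M]ipMC; ring.
Qed.
Lemma fro2D m k (M N : 'M[R]_(m, k)) :
  fro2 (M + N) = fro2 M + 2 * ipM M N + fro2 N.
Proof. by rewrite -[N in LHS]scale1r fro2_shift expr1n !mul1r. Qed.
Lemma fro2N m k (M : 'M[R]_(m, k)) : fro2 (- M) = fro2 M.
Proof. by rewrite /fro2 ipMNl ipMNr opprK. Qed.
Lemma fro2_sub_le m k (M N : 'M[R]_(m, k)) : fro2 (M - N) <= 2 * fro2 M + 2 * fro2 N.
Proof.
have := fro2_ge0 (M + N); rewrite fro2D fro2D fro2N ipMNr => ?; lra.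
Qed.
Lemma fro2_tr m k (M : 'M[R]_(m,k)) : fro2 M = \tr (M *m M^T).
Proof.
rewrite /fro2 /ipM /mxtrace; apply: eq_bigr => r _; rewrite !mxE.
by apply: eq_bigr => c _; rewrite !mxE.
Qed.
Lemma fro2_mulSO m k (M : 'M[R]_(m,k)) Q : SOmx Q -> fro2 (M *m Q) = fro2 M.
Proof.
case=> HQ _; rewrite !fro2_tr trmx_mul !mulmxA -[M *m Q *m Q^T]mulmxA.
by rewrite (mulmx1C HQ) mulmx1.
Qed.
Lemma wnormM_BBt m k p (Y : 'M[R]_(m,k)) (B : 'M[R]_(k,p)) :
  wnormM Y (B *m B^T) = fro2 (Y *m B).
Proof. by rewrite fro2_tr /wnormM trmx_mul !mulmxA. Qed.
Lemma wnormM_qform m k (Y : 'M[R]_(m,k)) P :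
  wnormM Y P = \sum_(r < m) qform (fun u w => P u w) (fun c => Y r c).
Proof.
rewrite /wnormM /mxtrace; apply: eq_bigr => r _; rewrite /qform mxE.
rewrite [RHS]exchange_big /=; apply: eq_bigr => c' _; rewrite !mxE mulr_suml.
by apply: eq_bigr => c _; rewrite ?mxE.
Qed.
Lemma wnormMD m k (Y : 'M[R]_(m,k)) P Q : wnormM Y (P + Q) = wnormM Y P + wnormM Y Q.
Proof. by rewrite /wnormM mulmxDr mulmxDl mxtraceD. Qed.
Lemma wnormMZ m k (Y : 'M[R]_(m,k)) t P : wnormM Y (t *: P) = t * wnormM Y P.
Proof. by rewrite /wnormM -scalemxAr -scalemxAl mxtraceZ. Qed.
Lemma wnormM0 m k (Y : 'M[R]_(m,k)) : wnormM Y 0 = 0.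
Proof. by rewrite /wnormM mulmx0 mul0mx mxtrace0. Qed.
Lemma wnormM0l m k (P : 'M[R]_k) : wnormM (0 : 'M[R]_(m,k)) P = 0.
Proof. by rewrite /wnormM !mul0mx mxtrace0. Qed.
Lemma wnormM_sum m k (Y : 'M[R]_(m,k)) (I : Type) (r : seq I) (Pr : pred I) (F : I -> 'M[R]_k) :
  wnormM Y (\sum_(i <- r | Pr i) F i) = \sum_(i <- r | Pr i) wnormM Y (F i).
Proof. exact: (big_morph _ (wnormMD Y) (wnormM0 Y)). Qed.
Lemma wnormM1 m k (Y : 'M[R]_(m,k)) : wnormM Y 1%:M = fro2 Y.
Proof. by rewrite -(mulmx1 1%:M) -{2}trmx1 wnormM_BBt mulmx1. Qed.

Definition qformM k (P : 'M[R]_k) z := qform (fun u w => P u w) z.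
Lemma qformMD k (P Q : 'M[R]_k) z : qformM (P + Q) z = qformM P z + qformM Q z.
Proof.
rewrite /qformM /qform -big_split; apply: eq_bigr => u _; rewrite -big_split.
by apply: eq_bigr => w _; rewrite mxE mulrDr mulrDl.
Qed.
Lemma qformMZ k (P : 'M[R]_k) t z : qformM (t *: P) z = t * qformM P z.
Proof.
rewrite /qformM /qform mulr_sumr; apply: eq_bigr => u _; rewrite mulr_sumr.
by apply: eq_bigr => w _; rewrite mxE; ring.
Qed.
Lemma qformM0 k z : qformM (0 : 'M[R]_k) z = 0.
Proof. by rewrite /qformM /qform big1 // => u _; rewrite big1 // => w _; rewrite mxE mulr0 mul0r. Qed.
Lemma qformM_sum k (I : Type) (r : seq I) (Pr : pred I) (F : I -> 'M[R]_k) z :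
  qformM (\sum_(i <- r | Pr i) F i) z = \sum_(i <- r | Pr i) qformM (F i) z.
Proof. exact: (big_morph (fun P => qformM P z) (fun P Q => qformMD P Q z) (qformM0 z)). Qed.
Lemma qform0f (J : finType) (P : J -> J -> R) : qform P (fun=> 0) = 0.
Proof. by rewrite /qform big1 // => u _; rewrite big1 // => w _; rewrite !mul0r. Qed.
Lemma qformN (J : finType) (P : J -> J -> R) z : qform P (fun u => - z u) = qform P z.
Proof. by apply: eq_bigr => u _; apply: eq_bigr => w _; rewrite /=; ring. Qed.

Lemma psdM_ge0 k (P : 'M[R]_k) z : psdM P -> 0 <= qformM P z.
Proof. by case=> _ H; apply: H. Qed.
Lemma psdMD k (P Q : 'M[R]_k) : psdM P -> psdM Q -> psdM (P + Q).
Proof.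
move=> [s1 p1] [s2 p2]; split=> [u w|z]; first by rewrite !mxE s1 s2.
by have := qformMD P Q z; rewrite /qformM => ->; apply: addr_ge0.
Qed.
Lemma psdMZ k (P : 'M[R]_k) t : 0 <= t -> psdM P -> psdM (t *: P).
Proof.
move=> t0 [s1 p1]; split=> [u w|z]; first by rewrite !mxE s1.
by have := qformMZ P t z; rewrite /qformM => ->; apply: mulr_ge0.
Qed.
Lemma psdM0 k : psdM (0 : 'M[R]_k).
Proof. split=> [u w|z]; first by rewrite !mxE. by have := qformM0 z; rewrite /qformM => ->. Qed.
Lemma psdM_sum k (I : Type) (r : seq I) (Pr : pred I) (F : I -> 'M[R]_k) :
  (forall i, Pr i -> psdM (F i)) -> psdM (\sum_(i <- r | Pr i) F i).
Proof. by move=> H; apply: big_ind => //; [exact: psdM0 | exact: psdMD]. Qed.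
Lemma psdM_BBt k p (B : 'M[R]_(k, p)) : psdM (B *m B^T).
Proof.
split=> [u w|z].
  by rewrite !mxE; apply: eq_bigr => i _; rewrite !mxE mulrC.
have := wnormM_BBt (\row_c z c) B; rewrite wnormM_qform big_ord1.
have -> : (fun c => (\row_c0 z c0) 0 c) = z by apply: funext => c; rewrite mxE.
by move=> ->; apply: fro2_ge0.
Qed.
Lemma psdM1 k : psdM (1%:M : 'M[R]_k).
Proof. by have := psdM_BBt (1%:M : 'M[R]_k); rewrite trmx1 mulmx1. Qed.

End Gen.

Section Prob.
Variables (R : realType) (d A : nat) (n : 'I_A -> nat) (D : pgo_data R d n).
Local Notation st := (state R d n).

Definition L1 a b (i : 'I_(n a)) (j : 'I_(n b)) (X : st) : 'M[R]_d :=
  Rv X i *m Rt D i j - Rv X j.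
Definition L2 a b (i : 'I_(n a)) (j : 'I_(n b)) (X : st) : 'M[R]_(d, 1) :=
  Rv X i *m tt D i j + tv X i - tv X j.
Definition Bf a b (i : 'I_(n a)) (j : 'I_(n b)) (X Y : st) : R :=
  kap D i j * ipM (L1 i j X) (L1 i j Y) + tau D i j * ipM (L2 i j X) (L2 i j Y).

Lemma qfE a b (i : 'I_(n a)) (j : 'I_(n b)) X :
  qf D i j X = kap D i j * fro2 (L1 i j X) + tau D i j * fro2 (L2 i j X).
Proof. by []. Qed.

Lemma RvD (X Y : st) a (i : 'I_(n a)) : Rv (fun w => X w + Y w) i = Rv X i + Rv Y i.
Proof. by apply/matrixP => r c; rewrite !mxE. Qed.
Lemma RvZ (X : st) t a (i : 'I_(n a)) : Rv (fun w => t *: X w) i = t *: Rv X i.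
Proof. by apply/matrixP => r c; rewrite !mxE. Qed.
Lemma tvD (X Y : st) a (i : 'I_(n a)) : tv (fun w => X w + Y w) i = tv X i + tv Y i.
Proof. by apply/matrixP => r c; rewrite !mxE. Qed.
Lemma tvZ (X : st) t a (i : 'I_(n a)) : tv (fun w => t *: X w) i = t *: tv X i.
Proof. by apply/matrixP => r c; rewrite !mxE. Qed.
Lemma Rv0 a (i : 'I_(n a)) : Rv (fun _ => 0 : 'M[R]_(d, 1 + d)) i = 0.
Proof. by apply/matrixP => r c; rewrite !mxE. Qed.
Lemma tv0 a (i : 'I_(n a)) : tv (fun _ => 0 : 'M[R]_(d, 1 + d)) i = 0.
Proof. by apply/matrixP => r c; rewrite !mxE. Qed.

Lemma negE (Y : st) : (fun w => - Y w) = (fun w => (-1) *: Y w).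
Proof. by apply: funext => w; rewrite scaleN1r. Qed.

Lemma L1D a b (i : 'I_(n a)) (j : 'I_(n b)) X Y :
  L1 i j (fun w => X w + Y w) = L1 i j X + L1 i j Y.
Proof. by rewrite /L1 !RvD mulmxDl opprD addrACA. Qed.
Lemma L1Z a b (i : 'I_(n a)) (j : 'I_(n b)) X t :
  L1 i j (fun w => t *: X w) = t *: L1 i j X.
Proof. by rewrite /L1 !RvZ -scalemxAl scalerBr. Qed.
Lemma L2D a b (i : 'I_(n a)) (j : 'I_(n b)) X Y :
  L2 i j (fun w => X w + Y w) = L2 i j X + L2 i j Y.
Proof. by rewrite /L2 !RvD !tvD mulmxDl (addrACA (Rv X i *m _)) opprD (addrACA (_ + tv X i)). Qed.
Lemma L2Z a b (i : 'I_(n a)) (j : 'I_(n b)) X t :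
  L2 i j (fun w => t *: X w) = t *: L2 i j X.
Proof. by rewrite /L2 !RvZ !tvZ -scalemxAl -scalerDr -scalerBr. Qed.
Lemma L1_0 a b (i : 'I_(n a)) (j : 'I_(n b)) : L1 i j (fun _ => 0) = 0.
Proof. by rewrite /L1 !Rv0 mul0mx subrr. Qed.
Lemma L2_0 a b (i : 'I_(n a)) (j : 'I_(n b)) : L2 i j (fun _ => 0) = 0.
Proof. by rewrite /L2 Rv0 !tv0 mul0mx !addr0 subrr. Qed.

Lemma BfD a b (i : 'I_(n a)) (j : 'I_(n b)) X Y Z :
  Bf i j X (fun w => Y w + Z w) = Bf i j X Y + Bf i j X Z.
Proof. by rewrite /Bf L1D L2D !ipMDr; ring. Qed.
Lemma BfZ a b (i : 'I_(n a)) (j : 'I_(n b)) X Y t :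
  Bf i j X (fun w => t *: Y w) = t * Bf i j X Y.
Proof. by rewrite /Bf L1Z L2Z !ipMZr; ring. Qed.
Lemma Bf0 a b (i : 'I_(n a)) (j : 'I_(n b)) X : Bf i j X (fun _ => 0) = 0.
Proof. by rewrite /Bf L1_0 L2_0 !ipM0r !mulr0 addr0. Qed.
Lemma BfN a b (i : 'I_(n a)) (j : 'I_(n b)) X Y :
  Bf i j X (fun w => - Y w) = - Bf i j X Y.
Proof. by rewrite negE BfZ mulN1r. Qed.
Lemma Bf_big a b (i : 'I_(n a)) (j : 'I_(n b)) X (I : Type) (r : seq I) (P : pred I)
  (E : I -> st) :
  Bf i j X (fun w => \sum_(k <- r | P k) E k w) = \sum_(k <- r | P k) Bf i j X (E k).
Proof.
elim: r => [|x r IH].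
  rewrite big_nil -(Bf0 i j X); congr Bf; apply: funext => w; by rewrite big_nil.
rewrite big_cons; case Px: (P x).
  rewrite -IH -BfD; congr Bf; apply: funext => w; by rewrite big_cons Px.
rewrite -IH; congr Bf; apply: funext => w; by rewrite big_cons Px.
Qed.

Lemma qf_shift a b (i : 'I_(n a)) (j : 'I_(n b)) X Y t :
  qf D i j (fun w => X w + t *: Y w) = qf D i j X + t * (2 * Bf i j X Y) + t ^+ 2 * qf D i j Y.
Proof. rewrite !qfE L1D L2D L1Z L2Z !fro2_shift /Bf; ring. Qed.
Lemma qf_add a b (i : 'I_(n a)) (j : 'I_(n b)) X Y :
  qf D i j (fun w => X w + Y w) = qf D i j X + 2 * Bf i j X Y + qf D i j Y.
Proof.
have -> : (fun w => X w + Y w) = (fun w => X w + 1 *: Y w).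
  by apply: funext => w; rewrite scale1r.
by rewrite qf_shift expr1n !mul1r.
Qed.
Lemma qfN a b (i : 'I_(n a)) (j : 'I_(n b)) Y : qf D i j (fun w => - Y w) = qf D i j Y.
Proof. by rewrite !qfE negE L1Z L2Z !scaleN1r !fro2N. Qed.
Lemma qf_ge0 a b (i : 'I_(n a)) (j : 'I_(n b)) X :
  0 <= kap D i j -> 0 <= tau D i j -> 0 <= qf D i j X.
Proof. by move=> k0 t0; rewrite qfE addr_ge0 // mulr_ge0 // fro2_ge0. Qed.

Lemma pf_ge_qf a b (i : 'I_(n a)) (j : 'I_(n b)) Y :
  SOmx (Rt D i j) -> 0 <= kap D i j -> 0 <= tau D i j -> qf D i j Y <= pf D i j Y.
Proof.
move=> HQ k0 t0; rewrite qfE /pf /L1 /L2.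
have h1 := fro2_sub_le (Rv Y i *m Rt D i j) (Rv Y j).
rewrite fro2_mulSO // in h1.
have h2 := fro2_sub_le (Rv Y i *m tt D i j + tv Y i) (tv Y j).
have e1 := ler_wpM2l k0 h1; have e2 := ler_wpM2l t0 h2.
apply: (le_trans (lerD e1 e2)).
by rewrite le_eqVlt; apply/orP; left; apply/eqP; ring.
Qed.

Lemma RvN (Y : st) a (i : 'I_(n a)) : Rv (fun w => - Y w) i = - Rv Y i.
Proof. by rewrite negE RvZ scaleN1r. Qed.
Lemma tvN (Y : st) a (i : 'I_(n a)) : tv (fun w => - Y w) i = - tv Y i.
Proof. by rewrite negE tvZ scaleN1r. Qed.
Lemma pfN a b (i : 'I_(n a)) (j : 'I_(n b)) Y : pf D i j (fun w => - Y w) = pf D i j Y.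
Proof. by rewrite /pf !RvN !tvN mulNmx -opprD !fro2N. Qed.
Lemma pf0 a b (i : 'I_(n a)) (j : 'I_(n b)) : pf D i j (fun _ => 0) = 0.
Proof.
rewrite /pf !Rv0 !tv0 mul0mx addr0.
have -> : fro2 (0 : 'M[R]_d) = 0 by rewrite /fro2 ipM0r.
have -> : fro2 (0 : 'M[R]_(d, 1)) = 0 by rewrite /fro2 ipM0r.
by rewrite !mulr0 !addr0 mulr0.
Qed.

Lemma st_decomp (Y : st) w :
  \sum_(v : node n) \sum_(r < d) \sum_(c < 1 + d) Y v r c *: e_st R v r c w = Y w.
Proof.
rewrite (bigD1 w) //= [X in _ + X]big1 ?addr0.
  rewrite [RHS]matrix_sum_delta; apply: eq_bigr => r _; apply: eq_bigr => c _.
  by rewrite /e_st eqxx.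
move=> v /negbTE vw; rewrite big1 // => r _; rewrite big1 // => c _.
by rewrite /e_st eq_sym vw scaler0.
Qed.

Lemma Bf_decomp a b (i : 'I_(n a)) (j : 'I_(n b)) X (Y : st) :
  \sum_(v : node n) \sum_(r < d) \sum_(c < 1 + d) Y v r c * Bf i j X (e_st R v r c)
  = Bf i j X Y.
Proof.
transitivity (Bf i j X (fun w => \sum_(v : node n) \sum_(r < d) \sum_(c < 1 + d)
   Y v r c *: e_st R v r c w)); last first.
  by congr Bf; apply: funext => w; apply: st_decomp.
rewrite Bf_big; apply: eq_bigr => v _; rewrite Bf_big; apply: eq_bigr => r _.
rewrite Bf_big; apply: eq_bigr => c _; by rewrite BfZ.
Qed.

End Prob.

Arguments quot {R} f h.

Lemma quot_add (R : realType) (f g : R -> R) h : quot (fun t => f t + g t) h = quot f h + quot g h.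
Proof. by rewrite /quot opprD addrACA scalerDr. Qed.
Lemma quot_sum (R : realType) (I : Type) (r : seq I) (P : pred I) (f : I -> R -> R) h :
  quot (fun t => \sum_(k <- r | P k) f k t) h = \sum_(k <- r | P k) quot (f k) h.
Proof. by rewrite /quot -sumrB scaler_sumr. Qed.

Section Sums.
Variables (R : realType) (d A : nat) (n : 'I_A -> nat) (D : pgo_data R d n).

Lemma sum_aaD f g : sum_aa D (fun a i j => f a i j + g a i j) = sum_aa D f + sum_aa D g.
Proof. by rewrite /sum_aa -big_split; apply: eq_bigr => a _; rewrite -big_split. Qed.
Lemma sum_abD f g : sum_ab D (fun a b i j => f a b i j + g a b i j) = sum_ab D f + sum_ab D g.
Proof.
rewrite /sum_ab -big_split; apply: eq_bigr => a _; rewrite -big_split.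
by apply: eq_bigr => b _; rewrite -big_split.
Qed.
Lemma sum_aaZ c f : c * sum_aa D f = sum_aa D (fun a i j => c * f a i j).
Proof. by rewrite /sum_aa mulr_sumr; apply: eq_bigr => a _; rewrite mulr_sumr. Qed.
Lemma sum_abZ c f : c * sum_ab D f = sum_ab D (fun a b i j => c * f a b i j).
Proof.
rewrite /sum_ab mulr_sumr; apply: eq_bigr => a _; rewrite mulr_sumr.
by apply: eq_bigr => b _; rewrite mulr_sumr.
Qed.
Lemma sum_aa_ext f g : (forall a e, e \in Edg D a a -> f a e.1 e.2 = g a e.1 e.2) ->
  sum_aa D f = sum_aa D g.
Proof. by move=> H; apply: eq_bigr => a _; apply: eq_bigr => e He; apply: H. Qed.
Lemma sum_ab_ext f g : (forall a b e, e \in Edg D a b -> f a b e.1 e.2 = g a b e.1 e.2) ->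
  sum_ab D f = sum_ab D g.
Proof.
by move=> H; apply: eq_bigr => a _; apply: eq_bigr => b _; apply: eq_bigr => e He; apply: H.
Qed.
Lemma sum_aa_le f g : (forall a e, e \in Edg D a a -> f a e.1 e.2 <= g a e.1 e.2) ->
  sum_aa D f <= sum_aa D g.
Proof. by move=> H; apply: ler_sum => a _; apply: ler_sum => e He; apply: H. Qed.
Lemma sum_ab_le f g : (forall a b e, e \in Edg D a b -> f a b e.1 e.2 <= g a b e.1 e.2) ->
  sum_ab D f <= sum_ab D g.
Proof.
by move=> H; apply: ler_sum => a _; apply: ler_sum => b _; apply: ler_sum => e He; apply: H.
Qed.
Lemma sum_split (I : finType) (F : I -> forall a : 'I_A, 'I_(n a) -> 'I_(n a) -> R)
  (G : I -> forall a b : 'I_A, 'I_(n a) -> 'I_(n b) -> R) :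
  \sum_(x : I) (sum_aa D (F x) + sum_ab D (G x)) =
  sum_aa D (fun a i j => \sum_(x : I) F x a i j) + sum_ab D (fun a b i j => \sum_(x : I) G x a b i j).
Proof.
rewrite big_split /sum_aa /sum_ab; congr (_ + _).
  rewrite exchange_big; apply: eq_bigr => a _; rewrite exchange_big //.
rewrite exchange_big; apply: eq_bigr => a _; rewrite exchange_big; apply: eq_bigr => b _.
by rewrite exchange_big.
Qed.
End Sums.

Section Prob2.
Variables (R : realType) (d A : nat) (n : 'I_A -> nat) (D : pgo_data R d n).
Variables (rho drho : R -> R).
Variable LK : loss_kernel rho drho.
Variable Hok : data_ok D.
Local Notation st := (state R d n).

Lemma edge_quot a b (i : 'I_(n a)) (j : 'I_(n b)) (X E : st) :
  0 <= kap D i j -> 0 <= tau D i j ->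
  quot (fun t => Fe D rho i j (fun w => X w + t *: E w)) @ 0^' -->
  omega D drho i j X * Bf D i j X E.
Proof.
move=> k0 t0; rewrite /Fe /omega; case: (a == b).
- rewrite (_ : (fun t => qf D i j (fun w => X w + t *: E w) / 2) =
    (fun t => (qf D i j X + t * (2 * Bf D i j X E) + t ^+ 2 * qf D i j E) / 2));
    last by apply: funext => t; rewrite qf_shift.
  rewrite (_ : 1 * Bf D i j X E = 2 * Bf D i j X E / 2); last by field.
  exact: quotQ2.
- rewrite (_ : (fun t => rho (qf D i j (fun w => X w + t *: E w)) / 2) =
    (fun t => rho (qf D i j X + t * (2 * Bf D i j X E) + t ^+ 2 * qf D i j E) / 2));
    last by apply: funext => t; rewrite qf_shift.
  rewrite (_ : drho (qf D i j X) * Bf D i j X E =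
     drho (qf D i j X) * (2 * Bf D i j X E) / 2); last by field.
  apply: (@quotRQ R rho drho LK) => t.
  by rewrite -qf_shift; apply: qf_ge0.
Qed.

Lemma Fobj_quot (X E : st) :
  quot (fun t => Fobj D rho (fun w => X w + t *: E w)) @ 0^' -->
  sum_aa D (fun a i j => omega D drho i j X * Bf D i j X E) +
  sum_ab D (fun a b i j => omega D drho i j X * Bf D i j X E).
Proof.
rewrite (_ : quot _ = fun h =>
   sum_aa D (fun a i j => quot (fun t => Fe D rho i j (fun w => X w + t *: E w)) h) +
   sum_ab D (fun a b i j => quot (fun t => Fe D rho i j (fun w => X w + t *: E w)) h)).
  apply: cvgD.
    apply: cvg_bigsum => a _; apply: cvg_bigsum => e He.
    by case: (Hok He) => _ k0 t0; apply: edge_quot.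
  apply: cvg_bigsum => a _; apply: cvg_bigsum => b _; apply: cvg_bigsum => e He.
  by case: (Hok He) => _ k0 t0; apply: edge_quot.
apply: funext => h; rewrite /Fobj quot_add /sum_aa /sum_ab !quot_sum; congr (_ + _).
  by apply: eq_bigr => a _; rewrite quot_sum.
apply: eq_bigr => a _; rewrite quot_sum; apply: eq_bigr => b _; by rewrite quot_sum.
Qed.

Lemma gradS_Fe a b (i : 'I_(n a)) (j : 'I_(n b)) (X : st) :
  0 <= kap D i j -> 0 <= tau D i j ->
  gradS (Fe D rho i j) X =
  fun v => \matrix_(r, c) (omega D drho i j X * Bf D i j X (e_st R v r c)).
Proof.
move=> k0 t0; apply: funext => v; apply/matrixP => r c; rewrite !mxE.
by apply: derive1_quot; apply: edge_quot.
Qed.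

Lemma gradS_Fobj (X : st) :
  gradS (Fobj D rho) X =
  fun v => \matrix_(r, c) (sum_aa D (fun a i j => omega D drho i j X * Bf D i j X (e_st R v r c)) +
                           sum_ab D (fun a b i j => omega D drho i j X * Bf D i j X (e_st R v r c))).
Proof.
apply: funext => v; apply/matrixP => r c; rewrite !mxE.
by apply: derive1_quot; apply: Fobj_quot.
Qed.

Lemma ipS_edge a b (i : 'I_(n a)) (j : 'I_(n b)) (X Y : st) w0 :
  ipS (fun v => \matrix_(r, c) (w0 * Bf D i j X (e_st R v r c))) Y = w0 * Bf D i j X Y.
Proof.
rewrite -Bf_decomp /ipS /ipM mulr_sumr; apply: eq_bigr => v _; rewrite mulr_sumr.
by apply: eq_bigr => r _; rewrite mulr_sumr; apply: eq_bigr => c _; rewrite mxE; ring.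
Qed.

Lemma ipS_gradFe a b (i : 'I_(n a)) (j : 'I_(n b)) (X Y : st) :
  0 <= kap D i j -> 0 <= tau D i j ->
  ipS (gradS (Fe D rho i j) X) Y = omega D drho i j X * Bf D i j X Y.
Proof. by move=> k0 t0; rewrite gradS_Fe // ipS_edge. Qed.

Lemma ipS_sum3 (F : node n -> 'I_d -> 'I_(1 + d) -> forall a : 'I_A, 'I_(n a) -> 'I_(n a) -> R)
  (G : node n -> 'I_d -> 'I_(1 + d) -> forall a b : 'I_A, 'I_(n a) -> 'I_(n b) -> R) (Y : st) :
  ipS (fun v => \matrix_(r, c) (sum_aa D (F v r c) + sum_ab D (G v r c))) Y =
  sum_aa D (fun a i j => ipS (fun v => \matrix_(r, c) F v r c a i j) Y) +
  sum_ab D (fun a b i j => ipS (fun v => \matrix_(r, c) G v r c a b i j) Y).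
Proof.
rewrite /ipS /ipM.
transitivity (\sum_(v : node n) \sum_(r < d) \sum_(c < 1 + d)
  (sum_aa D (fun a i j => Y v r c * F v r c a i j) +
   sum_ab D (fun a b i j => Y v r c * G v r c a b i j))).
  apply: eq_bigr => v _; apply: eq_bigr => r _; apply: eq_bigr => c _.
  by rewrite mxE mulrC mulrDr sum_aaZ sum_abZ.
transitivity (\sum_(v : node n) \sum_(r < d)
  (sum_aa D (fun a i j => \sum_(c < 1 + d) Y v r c * F v r c a i j) +
   sum_ab D (fun a b i j => \sum_(c < 1 + d) Y v r c * G v r c a b i j))).
  by apply: eq_bigr => v _; apply: eq_bigr => r _; exact: sum_split.
transitivity (\sum_(v : node n)
  (sum_aa D (fun a i j => \sum_(r < d) \sum_(c < 1 + d) Y v r c * F v r c a i j) +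
   sum_ab D (fun a b i j => \sum_(r < d) \sum_(c < 1 + d) Y v r c * G v r c a b i j))).
  by apply: eq_bigr => v _; exact: sum_split.
rewrite sum_split; congr (_ + _).
  apply: eq_bigr => a _; apply: eq_bigr => e _; apply: eq_bigr => v _.
  by apply: eq_bigr => r _; apply: eq_bigr => c _; rewrite mxE mulrC.
apply: eq_bigr => a _; apply: eq_bigr => b _; apply: eq_bigr => e _; apply: eq_bigr => v _.
by apply: eq_bigr => r _; apply: eq_bigr => c _; rewrite mxE mulrC.
Qed.

Lemma ipS_gradFobj (X Y : st) :
  ipS (gradS (Fobj D rho) X) Y =
  sum_aa D (fun a i j => omega D drho i j X * Bf D i j X Y) +
  sum_ab D (fun a b i j => omega D drho i j X * Bf D i j X Y).
Proof.
rewrite gradS_Fobj ipS_sum3; congr (_ + _).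
  by apply: eq_bigr => a _; apply: eq_bigr => e _; rewrite ipS_edge.
by apply: eq_bigr => a _; apply: eq_bigr => b _; apply: eq_bigr => e _; rewrite ipS_edge.
Qed.

End Prob2.

Lemma sum_node (A : nat) (n : 'I_A -> nat) (R : realType) (F : node n -> R) :
  \sum_(v : node n) F v = \sum_(a < A) \sum_(i < n a) F (nd i).
Proof.
rewrite (sig_big_dep xpredT (fun _ => xpredT) (fun a (i : 'I_(n a)) => F (nd i))) /=.
by apply: eq_bigr => -[a i].
Qed.

Section Prob3.
Variables (R : realType) (d A : nat) (n : 'I_A -> nat) (D : pgo_data R d n).
Variables (rho drho : R -> R) (zeta : R).
Variable LK : loss_kernel rho drho.
Variable Hok : data_ok D.
Local Notation st := (state R d n).

Definition Bj : 'M[R]_(1 + d, d) := col_mx 0 1%:M.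
Definition B0 : 'M[R]_(1 + d, 1) := col_mx 1%:M 0.
Definition Bw a b (i : 'I_(n a)) (j : 'I_(n b)) : 'M[R]_(1 + d, 1) := col_mx 1%:M (tt D i j).
Definition Jm := Bj *m Bj^T.
Definition E0m := B0 *m B0^T.
Definition Wm a b (i : 'I_(n a)) (j : 'I_(n b)) := Bw i j *m (Bw i j)^T.
Definition Kn a b (i : 'I_(n a)) (j : 'I_(n b)) (v : node n) : 'M[R]_(1 + d) :=
  2 *: ((if nd i == v then kap D i j *: Jm + tau D i j *: Wm i j else 0) +
        (if nd j == v then kap D i j *: Jm + tau D i j *: E0m else 0)).
Definition PiW (om : forall a b : 'I_A, 'I_(n a) -> 'I_(n b) -> R) (v : node n) : 'M[R]_(1 + d) :=
  zeta *: 1%:M + (\sum_(a < A) \sum_(e in Edg D a a) om a a e.1 e.2 *: Kn e.1 e.2 v)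
  + (\sum_(a < A) \sum_(b < A | b != a) \sum_(e in Edg D a b) om a b e.1 e.2 *: Kn e.1 e.2 v).

Lemma Y_Bj (M : 'M[R]_(d, 1 + d)) : M *m Bj = rsubmx M.
Proof. by rewrite -{1}(hsubmxK M) /Bj mul_row_col mulmx0 add0r mulmx1. Qed.
Lemma Y_B0 (M : 'M[R]_(d, 1 + d)) : M *m B0 = lsubmx M.
Proof. by rewrite -{1}(hsubmxK M) /B0 mul_row_col mulmx0 addr0 mulmx1. Qed.
Lemma Y_Bw a b (i : 'I_(n a)) (j : 'I_(n b)) (M : 'M[R]_(d, 1 + d)) :
  M *m Bw i j = rsubmx M *m tt D i j + lsubmx M.
Proof. by rewrite -{1}(hsubmxK M) /Bw mul_row_col mulmx1 addrC. Qed.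

Lemma sum_if (Y : st) (u : node n) (M : 'M[R]_(1 + d)) :
  \sum_(v : node n) wnormM (Y v) (if u == v then M else 0) = wnormM (Y u) M.
Proof.
rewrite (bigD1 u) //= eqxx big1 ?addr0 // => v /negbTE vu.
by rewrite eq_sym vu wnormM0.
Qed.

Lemma wn_Kn a b (i : 'I_(n a)) (j : 'I_(n b)) (Y : st) :
  \sum_(v : node n) wnormM (Y v) (Kn i j v) = pf D i j Y.
Proof.
rewrite /Kn.
under eq_bigr => v _ do rewrite wnormMZ wnormMD.
rewrite -mulr_sumr big_split /= !sum_if !wnormMD !wnormMZ /Jm /E0m /Wm !wnormM_BBt.
rewrite !Y_Bj !Y_B0 !Y_Bw /pf /Rv /tv; ring.
Qed.

Lemma wnPiW om (Y : st) :
  \sum_(v : node n) wnormM (Y v) (PiW om v) =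
  zeta * nrm2 Y + sum_aa D (fun a i j => om a a i j * pf D i j Y)
  + sum_ab D (fun a b i j => om a b i j * pf D i j Y).
Proof.
rewrite /PiW.
transitivity (\sum_(v : node n) (zeta * fro2 (Y v) +
  (\sum_(a < A) \sum_(e in Edg D a a) om a a e.1 e.2 * wnormM (Y v) (Kn e.1 e.2 v)) +
  (\sum_(a < A) \sum_(b < A | b != a) \sum_(e in Edg D a b)
      om a b e.1 e.2 * wnormM (Y v) (Kn e.1 e.2 v)))).
  apply: eq_bigr => v _; rewrite !wnormMD wnormMZ wnormM1 wnormM_sum; congr (_ + _ + _).
    by apply: eq_bigr => a _; rewrite wnormM_sum; apply: eq_bigr => e _; rewrite wnormMZ.
  rewrite wnormM_sum; apply: eq_bigr => a _; rewrite wnormM_sum; apply: eq_bigr => b _; rewrite wnormM_sum.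
  by apply: eq_bigr => e _; rewrite wnormMZ.
rewrite !big_split /= -mulr_sumr; congr (_ + _ + _).
  rewrite /sum_aa exchange_big; apply: eq_bigr => a _; rewrite exchange_big.
  by apply: eq_bigr => e _; rewrite -mulr_sumr wn_Kn.
rewrite /sum_ab exchange_big; apply: eq_bigr => a _; rewrite exchange_big.
apply: eq_bigr => b _; rewrite exchange_big.
by apply: eq_bigr => e _; rewrite -mulr_sumr wn_Kn.
Qed.


Definition PiX (Xk : st) := PiW (fun a b i j => omega D drho i j Xk).
Definition Pmax := PiW (fun a b i j => 1).

Lemma st_subK (X Xk : st) : (fun w => Xk w + st_sub X Xk w) = X.
Proof. by apply: funext => w; rewrite /st_sub addrC subrK. Qed.
Lemma stsub0 (Xk : st) : st_sub Xk Xk = fun _ => 0.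
Proof. by apply: funext => w; rewrite /st_sub subrr. Qed.
Lemma nrm2_ge0 (Y : st) : 0 <= nrm2 Y.
Proof. by apply: sumr_ge0 => v _; apply: fro2_ge0. Qed.
Lemma ipS0 (g : st) : ipS g (fun _ => 0) = 0.
Proof. by rewrite /ipS big1 // => v _; rewrite ipM0r. Qed.
Lemma edge_ok a b (e : 'I_(n a) * 'I_(n b)) : e \in Edg D a b ->
  [/\ SOmx (Rt D e.1 e.2), 0 <= kap D e.1 e.2 & 0 <= tau D e.1 e.2].
Proof. exact: Hok. Qed.

Lemma Ee_edge a b (i : 'I_(n a)) (j : 'I_(n b)) (X Xk : st) :
  0 <= kap D i j -> 0 <= tau D i j ->
  Ee D rho drho i j X Xk = 2^-1 * (omega D drho i j Xk * pf D i j (st_sub X Xk))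
    + omega D drho i j Xk * Bf D i j Xk (st_sub X Xk) + Fe D rho i j Xk.
Proof. by move=> k0 t0; rewrite /Ee (ipS_gradFe LK) //; ring. Qed.

Lemma Hfun_rep (X Xk : st) :
  Hfun D rho drho zeta X Xk =
  (\sum_(v : node n) wnormM (st_sub X Xk v) (PiX Xk v)) / 2
  + ipS (gradS (Fobj D rho) Xk) (st_sub X Xk) + Fobj D rho Xk.
Proof.
rewrite /Hfun (sum_aa_ext (g := fun a i j =>
   2^-1 * (omega D drho i j Xk * pf D i j (st_sub X Xk))
    + omega D drho i j Xk * Bf D i j Xk (st_sub X Xk) + Fe D rho i j Xk)); last first.
  by move=> a e /edge_ok [_ k0 t0]; apply: Ee_edge.
rewrite (sum_ab_ext (g := fun a b i j =>
   2^-1 * (omega D drho i j Xk * pf D i j (st_sub X Xk))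
    + omega D drho i j Xk * Bf D i j Xk (st_sub X Xk) + Fe D rho i j Xk)); last first.
  by move=> a b e /edge_ok [_ k0 t0]; apply: Ee_edge.
rewrite !sum_aaD !sum_abD -!sum_aaZ -!sum_abZ /PiX wnPiW (ipS_gradFobj LK Hok) /Fobj.
cbv beta; ring.
Qed.

Lemma Hblk_sum Pi (X Xk : st) :
  \sum_(a < A) Hblk D rho Pi (blockof X a) Xk =
  (\sum_(v : node n) wnormM (st_sub X Xk v) (Pi v)) / 2
  + ipS (gradS (Fobj D rho) Xk) (st_sub X Xk).
Proof.
rewrite /Hblk big_split /= -mulr_suml; congr (_ / 2 + _).
  by rewrite sum_node.
by rewrite /ipS sum_node.
Qed.

Lemma Hblk_node Pi a (Y : blk R d n a) (Xk : st) :
  Hblk D rho Pi Y Xk = \sum_(i < n a) Hnode D rho i (Pi (nd i)) (Y i) Xk.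
Proof. by rewrite /Hblk /Hnode big_split /= -mulr_suml. Qed.

Lemma Fe_le_Ee a b (i : 'I_(n a)) (j : 'I_(n b)) (X Xk : st) :
  SOmx (Rt D i j) -> 0 <= kap D i j -> 0 <= tau D i j ->
  Fe D rho i j X <= Ee D rho drho i j X Xk.
Proof.
move=> HQ k0 t0; rewrite Ee_edge //.
have hq := pf_ge_qf (st_sub X Xk) HQ k0 t0.
have qX : qf D i j X = qf D i j Xk + 2 * Bf D i j Xk (st_sub X Xk) + qf D i j (st_sub X Xk).
  by rewrite -qf_add st_subK.
have q0 := qf_ge0 Xk k0 t0; have qY := qf_ge0 (st_sub X Xk) k0 t0.
have qXg := qf_ge0 X k0 t0.
rewrite /Fe /omega; case: (a == b).
  by rewrite qX; lra.
case: LK => _ _ _ [Hs _] _; have /andP [dr0 dr1] := Hs _ q0.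
have ht := @tangent R rho drho LK _ _ q0 qXg.
rewrite qX in ht *.
have := ler_wpM2l dr0 hq.
move: ht; set B := Bf D i j Xk (st_sub X Xk); set qy := qf D i j (st_sub X Xk).
set p := pf D i j (st_sub X Xk); set dq := drho (qf D i j Xk).
move=> ht h2; nra.
Qed.

Lemma G_le_H xi (X Xk : st) : xi <= zeta ->
  Gfun D rho drho xi X Xk <= Hfun D rho drho zeta X Xk.
Proof.
move=> xz; rewrite /Gfun /Hfun; apply: lerD.
  apply: lerD => //; apply: sum_aa_le => a e /edge_ok [HQ k0 t0]; exact: Fe_le_Ee.
have := nrm2_ge0 (st_sub X Xk); set N := nrm2 _ => N0; nra.
Qed.

Lemma F_le_G xi (X Xk : st) : 0 <= xi -> Fobj D rho X <= Gfun D rho drho xi X Xk.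
Proof.
move=> x0; rewrite /Fobj /Gfun.
apply: (le_trans (y := sum_aa D (fun a i j => Fe D rho i j X)
   + sum_ab D (fun a b i j => Ee D rho drho i j X Xk))).
  apply: lerD => //; apply: sum_ab_le => a b e /edge_ok [HQ k0 t0]; exact: Fe_le_Ee.
rewrite lerDl; apply: mulr_ge0; [lra | exact: nrm2_ge0].
Qed.

Lemma Ee_self a b (i : 'I_(n a)) (j : 'I_(n b)) (Xk : st) :
  Ee D rho drho i j Xk Xk = Fe D rho i j Xk.
Proof. by rewrite /Ee stsub0 pf0 ipS0 mulr0 !add0r. Qed.
Lemma nrm2_self (Xk : st) : nrm2 (st_sub Xk Xk) = 0.
Proof. by rewrite stsub0 /nrm2 ipS0. Qed.

Lemma H_self (Xk : st) : Hfun D rho drho zeta Xk Xk = Fobj D rho Xk.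
Proof.
rewrite /Hfun nrm2_self mulr0 addr0 /Fobj.
congr (_ + _); [apply: sum_aa_ext => *| apply: sum_ab_ext => *]; exact: Ee_self.
Qed.
Lemma G_self xi (Xk : st) : Gfun D rho drho xi Xk Xk = Fobj D rho Xk.
Proof.
rewrite /Gfun nrm2_self mulr0 addr0 /Fobj.
congr (_ + _); apply: sum_ab_ext => *; exact: Ee_self.
Qed.

Lemma omega_bnd a b (e : 'I_(n a) * 'I_(n b)) (Xk : st) : e \in Edg D a b ->
  0 <= omega D drho e.1 e.2 Xk <= 1.
Proof.
move=> /edge_ok [_ k0 t0]; rewrite /omega; case: (a == b); first by rewrite ler01 lexx.
case: LK => _ _ _ [Hs _] _; apply: Hs; exact: qf_ge0.
Qed.

Lemma Kn_psd a b (i : 'I_(n a)) (j : 'I_(n b)) v :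
  0 <= kap D i j -> 0 <= tau D i j -> psdM (Kn i j v).
Proof.
move=> k0 t0; rewrite /Kn; apply: psdMZ => //; apply: psdMD.
  case: ifP => _; last exact: psdM0.
  by apply: psdMD; apply: psdMZ => //; apply: psdM_BBt.
case: ifP => _; last exact: psdM0.
by apply: psdMD; apply: psdMZ => //; apply: psdM_BBt.
Qed.

Lemma PiW_psd om v : 0 <= zeta ->
  (forall a b (e : 'I_(n a) * 'I_(n b)), e \in Edg D a b -> 0 <= om a b e.1 e.2) ->
  psdM (PiW om v).
Proof.
move=> z0 Hom; rewrite /PiW; apply: psdMD; first apply: psdMD.
- by apply: psdMZ => //; apply: psdM1.
- apply: psdM_sum => a _; apply: psdM_sum => e He; apply: psdMZ; first exact: Hom.
  by case: (edge_ok He) => _ k0 t0; apply: Kn_psd.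
- apply: psdM_sum => a _; apply: psdM_sum => b _; apply: psdM_sum => e He.
  apply: psdMZ; first exact: Hom.
  by case: (edge_ok He) => _ k0 t0; apply: Kn_psd.
Qed.

Lemma qPiW om v (w : 'I_(1 + d) -> R) :
  qformM (PiW om v) w = zeta * qformM 1%:M w
   + sum_aa D (fun a i j => om a a i j * qformM (Kn i j v) w)
   + sum_ab D (fun a b i j => om a b i j * qformM (Kn i j v) w).
Proof.
rewrite /PiW !qformMD qformMZ; congr (_ + _ + _).
  rewrite qformM_sum; apply: eq_bigr => a _; rewrite qformM_sum.
  by apply: eq_bigr => e _; rewrite qformMZ.
rewrite qformM_sum; apply: eq_bigr => a _; rewrite qformM_sum; apply: eq_bigr => b _.
by rewrite qformM_sum; apply: eq_bigr => e _; rewrite qformMZ.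
Qed.

Lemma PiX_le_Pmax (Xk : st) z : qdiagN (PiX Xk) z <= qdiagN Pmax z.
Proof.
apply: ler_sum => v _.
have := qPiW (fun a b i j => omega D drho i j Xk) v (fun c => z (v, c)).
have := qPiW (fun a b i j => 1) v (fun c => z (v, c)).
rewrite /qformM => -> ->; rewrite /PiX /Pmax.
apply: lerD; first apply: lerD => //.
  apply: sum_aa_le => a e He; apply: ler_wpM2r.
    by case: (edge_ok He) => _ k0 t0; apply: psdM_ge0; apply: Kn_psd.
  by case/andP: (omega_bnd Xk He).
apply: sum_ab_le => a b e He; apply: ler_wpM2r.
  by case: (edge_ok He) => _ k0 t0; apply: psdM_ge0; apply: Kn_psd.
by case/andP: (omega_bnd Xk He).
Qed.

Definition Pc (u w : colG d n) : R := if u.1 == w.1 then Pmax u.1 u.2 w.2 else 0.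

Lemma qPc z : qform Pc z = qdiagN Pmax z.
Proof.
rewrite /qform /qdiagN.
transitivity (\sum_(v : node n) \sum_(c : 'I_(1 + d)) \sum_(v' : node n) \sum_(c' : 'I_(1 + d))
   z (v, c) * Pc (v, c) (v', c') * z (v', c')).
  rewrite [RHS]pair_big /=; apply: eq_bigr => -[v c] _ /=.
  by rewrite [RHS]pair_big /=; apply: eq_bigr => -[v' c'] _.
apply: eq_bigr => v _; apply: eq_bigr => c _.
rewrite (bigD1 v) //= [X in _ + X]big1 ?addr0.
  by apply: eq_bigr => c' _; rewrite /Pc /= eqxx.
by move=> v' /negbTE vv; rewrite big1 // => c' _; rewrite /Pc /= eq_sym vv mulr0 mul0r.
Qed.

Lemma Pc_psd : 0 <= zeta -> psdf Pc.
Proof.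
move=> z0.
have HP : forall v, psdM (Pmax v).
  by move=> v; apply: PiW_psd => // *; apply: ler01.
split.
  move=> [v c] [v' c']; rewrite /Pc /=; case: (eqVneq v v') => [<-|vv] //.
  by case: (HP v) => S _; apply: S.
move=> z; rewrite qPc; apply: sumr_ge0 => v _; exact: (psdM_ge0 _ (HP v)).
Qed.

Lemma ipSN (g Y : st) : ipS g (fun w => - Y w) = - ipS g Y.
Proof. by rewrite /ipS -sumrN; apply: eq_bigr => v _; rewrite ipMNr. Qed.
Lemma nrm2N (Y : st) : nrm2 (fun w => - Y w) = nrm2 Y.
Proof. by apply: eq_bigr => v _; rewrite -/(fro2 _) fro2N. Qed.
Lemma stsub_add (Xk Y : st) : st_sub (fun w => Xk w + Y w) Xk = Y.
Proof. by apply: funext => w; rewrite /st_sub [Xk w + _]addrC addrK. Qed.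

Lemma Gblk_sum (Gam : forall a : 'I_A, colB d n a -> colB d n a -> R) (X Xk : st) :
  \sum_(a < A) Gblk D rho (Gam a) (blockof X a) Xk =
  (\sum_(a < A) wnB (Gam a) (blockof (st_sub X Xk) a)) / 2
  + ipS (gradS (Fobj D rho) Xk) (st_sub X Xk).
Proof. by rewrite /Gblk big_split /= -mulr_suml /ipS sum_node. Qed.

Lemma wnB_N a P (Y : st) : wnB P (blockof (fun w => - Y w) a) = wnB P (blockof Y a).
Proof.
rewrite /wnB; apply: eq_bigr => r _; rewrite -qformN; congr qform.
by apply: funext => u; rewrite /blockof mxE opprK.
Qed.

Lemma Fe_pm (a : 'I_A) (i j : 'I_(n a)) (Xk Y : st) :
  Fe D rho i j (fun w => Xk w + Y w) + Fe D rho i j (fun w => Xk w + - Y w)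
  = 2 * Fe D rho i j Xk + qf D i j Y.
Proof. by rewrite /Fe eqxx !qf_add BfN qfN; field. Qed.

Lemma Ee_pm a b (i : 'I_(n a)) (j : 'I_(n b)) (Xk Y : st) :
  Ee D rho drho i j (fun w => Xk w + Y w) Xk + Ee D rho drho i j (fun w => Xk w + - Y w) Xk
  = 2 * Fe D rho i j Xk + omega D drho i j Xk * pf D i j Y.
Proof. by rewrite /Ee !stsub_add pfN ipSN; field. Qed.

Lemma G_pm xi (Xk Y : st) :
  Gfun D rho drho xi (fun w => Xk w + Y w) Xk + Gfun D rho drho xi (fun w => Xk w + - Y w) Xk
  = 2 * Fobj D rho Xk + sum_aa D (fun a i j => qf D i j Y)
    + sum_ab D (fun a b i j => omega D drho i j Xk * pf D i j Y) + xi * nrm2 Y.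
Proof.
rewrite /Gfun !stsub_add nrm2N.
have E1 : sum_aa D (fun a i j => Fe D rho i j (fun w => Xk w + Y w))
        + sum_aa D (fun a i j => Fe D rho i j (fun w => Xk w + - Y w))
        = 2 * sum_aa D (fun a i j => Fe D rho i j Xk) + sum_aa D (fun a i j => qf D i j Y).
  by rewrite -sum_aaD sum_aaZ -sum_aaD; apply: sum_aa_ext => a e _; apply: Fe_pm.
have E2 : sum_ab D (fun a b i j => Ee D rho drho i j (fun w => Xk w + Y w) Xk)
        + sum_ab D (fun a b i j => Ee D rho drho i j (fun w => Xk w + - Y w) Xk)
        = 2 * sum_ab D (fun a b i j => Fe D rho i j Xk)
          + sum_ab D (fun a b i j => omega D drho i j Xk * pf D i j Y).
  by rewrite -sum_abD sum_abZ -sum_abD; apply: sum_ab_ext => a b e _; apply: Ee_pm.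
rewrite /Fobj; move: E1 E2.
set s1 := sum_aa D _; set s2 := sum_aa D _; set s3 := sum_aa D _; set s4 := sum_aa D _.
set t1 := sum_ab D _; set t2 := sum_ab D _; set t3 := sum_ab D _; set t4 := sum_ab D _.
move=> E1 E2; lra.
Qed.

Definition rowst (r0 : 'I_d) (z : colG d n -> R) : st :=
  fun v => \matrix_(r, c) (if r == r0 then z (v, c) else 0).

Lemma qform_rows (J : finType) (P : J -> J -> R) (r0 : 'I_d) (g : J -> R) :
  \sum_(r < d) qform P (fun u => if r == r0 then g u else 0) = qform P g.
Proof.
rewrite (bigD1 r0) //= eqxx [X in _ + X]big1 ?addr0 // => r /negbTE rr.
by rewrite rr qform0f.
Qed.

Lemma wnG_row P (r0 : 'I_d) z : wnG P (rowst r0 z) = qform P z.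
Proof.
rewrite /wnG -(qform_rows P r0 z); apply: eq_bigr => r _; congr qform.
by apply: funext => -[v c]; rewrite /rowst mxE.
Qed.

Lemma wnB_row a P (r0 : 'I_d) z : wnB P (blockof (rowst r0 z) a) = qform P (fun u => z (nd u.1, u.2)).
Proof.
rewrite /wnB -(qform_rows P r0); apply: eq_bigr => r _; congr qform.
by apply: funext => -[i c]; rewrite /blockof /rowst mxE.
Qed.

Lemma wnPi_row (Pi : node n -> 'M[R]_(1 + d)) (r0 : 'I_d) z :
  \sum_(v : node n) wnormM (rowst r0 z v) (Pi v) = qdiagN Pi z.
Proof.
apply: eq_bigr => v _; rewrite wnormM_qform -(qform_rows _ r0).
apply: eq_bigr => r _; congr qform.
by apply: funext => c; rewrite /rowst mxE.
Qed.

Lemma Hfun_blk (X Xk : st) :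
  Hfun D rho drho zeta X Xk = \sum_(a < A) Hblk D rho (PiX Xk) (blockof X a) Xk + Fobj D rho Xk.
Proof. by rewrite Hfun_rep Hblk_sum. Qed.

Section Gam.
Variables (xi : R) (Xk : st) (Gam : forall a : 'I_A, colB d n a -> colB d n a -> R).
Variable HG : forall X : st, Gfun D rho drho xi X Xk =
  \sum_(a < A) Gblk D rho (@Gam a) (blockof X a) Xk + Fobj D rho Xk.

Lemma c1 (r0 : 'I_d) z : xi <= zeta -> qdiagB Gam z <= qdiagN (PiX Xk) z.
Proof.
move=> xz; have := @G_le_H xi (fun w => Xk w + rowst r0 z w) Xk xz.
rewrite HG Hfun_rep Gblk_sum !stsub_add wnPi_row.
rewrite (eq_bigr (fun a => qform (@Gam a) (fun u => z (nd u.1, u.2)))); last first.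
  by move=> a _; rewrite wnB_row.
rewrite -/(qdiagB Gam z).
set W := qdiagB Gam z; set V := qdiagN _ z; set L := ipS _ _; set F := Fobj D rho Xk.
move=> H; lra.
Qed.

Lemma c2 (r0 : 'I_d) z Mk : 0 <= xi -> (forall Y : st, wnG Mk Y = Mform D drho Xk Y) ->
  qform Mk z <= qdiagB Gam z.
Proof.
move=> x0 HM.
have HW : \sum_(a < A) wnB (@Gam a) (blockof (rowst r0 z) a) =
  sum_aa D (fun a i j => qf D i j (rowst r0 z))
  + sum_ab D (fun a b i j => omega D drho i j Xk * pf D i j (rowst r0 z))
  + xi * nrm2 (rowst r0 z).
  have := G_pm xi Xk (rowst r0 z).
  rewrite !HG !Gblk_sum !stsub_add ipSN.
  have SN : \sum_(a < A) wnB (@Gam a) (blockof (fun w => - rowst r0 z w) a) =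
    \sum_(a < A) wnB (@Gam a) (blockof (rowst r0 z) a).
    by apply: eq_bigr => a _; rewrite wnB_N.
  rewrite SN.
  set W := \sum_(a < A) _; set L := ipS _ _; set F := Fobj D rho Xk.
  set s := sum_aa D _; set t := sum_ab D _; set N := nrm2 _.
  move=> H; lra.
rewrite -(wnG_row Mk r0 z) HM /Mform /qdiagB.
rewrite (eq_bigr (fun a => wnB (@Gam a) (blockof (rowst r0 z) a))); last first.
  by move=> a _; rewrite wnB_row.
rewrite HW -addrA lerD2l -[X in X <= _]addr0; apply: lerD.
  apply: sum_ab_le => a b e He; apply: ler_wpM2l; first by case/andP: (omega_bnd Xk He).
  by case: (edge_ok He) => HQ k0 t0; apply: pf_ge_qf.
by apply: mulr_ge0 => //; apply: nrm2_ge0.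
Qed.

Definition ext_blk a (Y : blk R d n a) : st := fun v =>
  if tag v == a then
    (if (insub (val (tagged v)) : option 'I_(n a)) is Some i then Y i - Xk (nd i) else 0)
  else 0.

Lemma ext_at a (Y : blk R d n a) (i : 'I_(n a)) : ext_blk Y (nd i) = Y i - Xk (nd i).
Proof. by rewrite /ext_blk /= eqxx valK. Qed.
Lemma ext_other a (Y : blk R d n a) a' (i : 'I_(n a')) : a' != a -> ext_blk Y (nd i) = 0.
Proof. by move=> H; rewrite /ext_blk /= (negbTE H). Qed.

Lemma Gblk_self a' P : Gblk D rho P (blockof Xk a') Xk = 0.
Proof.
rewrite /Gblk (_ : blk_sub _ _ = fun _ => 0); last first.
  by apply: funext => i; rewrite /blk_sub subrr.
rewrite /ipB big1 ?addr0; last by move=> i _; rewrite ipM0r.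
rewrite /wnB big1 ?mul0r // => r _.
rewrite (_ : (fun u : colB d n a' => (0 : 'M[R]_(d, 1 + d)) r u.2) = fun=> 0) ?qform0f //.
by apply: funext => u; rewrite mxE.
Qed.

Lemma Hblk_self a' Pi : Hblk D rho Pi (blockof Xk a') Xk = 0.
Proof.
rewrite /Hblk big1 ?mul0r ?add0r; last by move=> i _; rewrite subrr wnormM0l.
rewrite (_ : blk_sub _ _ = fun _ => 0); last first.
  by apply: funext => i; rewrite /blk_sub subrr.
by rewrite /ipB big1 // => i _; rewrite ipM0r.
Qed.

Lemma epart a (Y : blk R d n a) : xi <= zeta ->
  Gblk D rho (@Gam a) Y Xk <= Hblk D rho (PiX Xk) Y Xk /\
  (Y = blockof Xk a -> Gblk D rho (@Gam a) Y Xk = Hblk D rho (PiX Xk) Y Xk).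
Proof.
move=> xz; split; last by move=> ->; rewrite Gblk_self Hblk_self.
set X := fun w => Xk w + ext_blk Y w.
have bXa : blockof X a = Y.
  by apply: funext => i; rewrite /blockof /X ext_at addrC subrK.
have bXo : forall a', a' != a -> blockof X a' = blockof Xk a'.
  by move=> a' Ha; apply: funext => i; rewrite /blockof /X ext_other // addr0.
have := @G_le_H xi X Xk xz.
rewrite HG Hfun_blk (bigD1 a) //= [X in _ <= X + _](bigD1 a) //=.
have -> : \sum_(a' < A | a' != a) Gblk D rho (@Gam a') (blockof X a') Xk = 0.
  by apply: big1 => a' Ha; rewrite bXo // Gblk_self.
have -> : \sum_(a' < A | a' != a) Hblk D rho (PiX Xk) (blockof X a') Xk = 0.
  by apply: big1 => a' Ha; rewrite bXo // Hblk_self.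
by rewrite bXa !addr0 lerD2r.
Qed.

End Gam.
End Prob3.

Theorem proposition4 (R : realType) (d A : nat) (n : 'I_A -> nat)
  (D : pgo_data R d n) (rho drho : R -> R) (xi zeta : R) :
  (2 <= d)%N -> (forall a, (0 < n a)%N) -> data_ok D ->
  loss_kernel rho drho -> 0 <= xi -> xi <= zeta ->
  exists (Pi : state R d n -> node n -> 'M[R]_(1 + d))
         (Pc : colG d n -> colG d n -> R),
    psdf Pc /\
    forall Xk : state R d n, feasible Xk ->
    [/\ (* the Pi^{alpha(k)}_i are PSD *)
        (forall v : node n, psdM (Pi Xk v)),
        (* (a) *)
        (forall X : state R d n,
           Hfun D rho drho zeta X Xk
           = \sum_(a < A) Hblk D rho (Pi Xk) (blockof X a) Xk + Fobj D rho Xk)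
        /\ (forall (a : 'I_A) (Y : blk R d n a),
              Hblk D rho (Pi Xk) Y Xk
              = \sum_(i < n a) Hnode D rho i (Pi Xk (nd i)) (Y i) Xk),
        (* (b) *)
        (forall X : state R d n,
           [/\ Hfun D rho drho zeta X Xk
               = wnPi (Pi Xk) (st_sub X Xk) / 2
                 + ipS (gradS (Fobj D rho) Xk) (st_sub X Xk) + Fobj D rho Xk,
               Gfun D rho drho xi X Xk <= Hfun D rho drho zeta X Xk
             & Fobj D rho X <= Gfun D rho drho xi X Xk])
        /\ (Hfun D rho drho zeta Xk Xk = Gfun D rho drho xi Xk Xk
            /\ Gfun D rho drho xi Xk Xk = Fobj D rho Xk),
        (* (c) and (e), for Gamma^{alpha(k)} the PSD matrices of the
           block-diagonal quadratic part of G( . | X^(k)) *)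
        (forall Gam : forall a : 'I_A, colB d n a -> colB d n a -> R,
           (forall a : 'I_A, psdf (Gam a)) ->
           (forall X : state R d n,
              Gfun D rho drho xi X Xk
              = \sum_(a < A) Gblk D rho (Gam a) (blockof X a) Xk + Fobj D rho Xk) ->
           [/\ (* (c) Pi^(k) >= Gamma^(k) *)
               (forall z : colG d n -> R, qdiagB Gam z <= qdiagN (Pi Xk) z),
               (* (c) Gamma^(k) >= M^(k) *)
               (forall Mk : colG d n -> colG d n -> R, psdf Mk ->
                  (forall Y : state R d n, wnG Mk Y = Mform D drho Xk Y) ->
                  forall z : colG d n -> R, qform Mk z <= qdiagB Gam z)
             & (* (e) *)
               (forall (a : 'I_A) (Y : blk R d n a),
                  Gblk D rho (Gam a) Y Xk <= Hblk D rho (Pi Xk) Y Xk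
                  /\ (Y = blockof Xk a ->
                      Gblk D rho (Gam a) Y Xk = Hblk D rho (Pi Xk) Y Xk))])
      & (* (d) Pi >= Pi^(k), Pi independent of X^(k) *)
        (forall z : colG d n -> R, qdiagN (Pi Xk) z <= qform Pc z)].
Proof.
move=> d2 _ Hok LK x0 xz.
have z0 : 0 <= zeta by apply: le_trans xz.
have d0 : (0 < d)%N by apply: leq_trans d2.
pose r0 : 'I_d := Ordinal d0.
exists (PiX D drho zeta), (Pc D zeta); split; first exact: (Pc_psd Hok z0).
move=> Xk _; split.
- move=> v; apply: (PiW_psd Hok) => // a b e He.
  by case/andP: (omega_bnd LK Hok Xk He).
- split; first by move=> X; rewrite (Hfun_blk zeta LK Hok).
  by move=> a Y; rewrite Hblk_node.
- split.
    move=> X; split; first exact: (Hfun_rep zeta LK Hok).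
      exact: (G_le_H LK Hok X Xk xz).
    exact: (F_le_G LK Hok X Xk x0).
  by rewrite (H_self D rho drho zeta Xk) (G_self D rho drho xi Xk).
- move=> Gam _ HG; split.
  + by move=> z; apply: (c1 LK Hok HG r0 z xz).
  + by move=> Mk _ HM z; apply: (c2 LK Hok HG r0 z x0 HM).
  + by move=> a Y; apply: (epart LK Hok HG Y xz).
- by move=> z; rewrite (qPc D zeta z); apply: (PiX_le_Pmax zeta LK Hok Xk z).
Qed.
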